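(* Let $a,b,c,d\in\mathbb C$ with $a\notin\mathbb Z$ and $d\notin\{0,-1,-2,\dots\}$. Then, as an identity of formal power series in $x,y$, $$F(a,b;d;x)\,{}_1F_1(c;1-a;y)=\mathrm H_2(a,b,c;d;x,-y)+\sum_{k=1}^\infty\sum_{l=1}^k\frac{(-1)^{k-l}(k-1)!}{(l-1)!\,l!\,(k-l)!}\,\frac{(b)_l(c)_k}{(1-a)_k(1-a)_{k-l}(d)_l}\,x^ly^k\,\mathrm H_2(a-k+l,b+l,c+k;d+l;x,-y).$$
   Context: Pochhammer symbol: $(\lambda)_k=\Gamma(\lambda+k)/\Gamma(\lambda)$ for every integer $k$ (possibly negative) whenever defined; $(\lambda)_0=1$. $F(a,b;c;x)=\sum_{k\ge0}\frac{(a)_k(b)_k}{(c)_k k!}x^k$, ${}_1F_1(a;c;x)=\sum_{k\ge0}\frac{(a)_k}{(c)_k k!}x^k$. Confluent Horn function $\mathrm H_2(a,b,c;d;x,y)=\sum_{p,q\ge0}\frac{(a)_{p-q}(b)_p(c)_q}{(d)_p\,p!\,q!}x^py^q$. All functions are regarded as formal power series in $x,y$; the infinite double sum converges in the formal (degree) topology. *)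

(* Defs.v *)
From HB Require Import structures.
From mathcomp Require Import all_boot all_order all_algebra.
Set Implicit Arguments. Unset Strict Implicit. Unset Printing Implicit Defensive.
Import Order.TTheory GRing.Theory Num.Theory.
Local Open Scope ring_scope.

Section Defs.
Variable R : fieldType.

(* Pochhammer symbol (l)_k = Gamma(l+k)/Gamma(l) for every integer k:
   k = n >= 0 : l (l+1) ... (l+n-1);
   k = -(n+1) : 1 / ((l-1)(l-2)...(l-(n+1))). *)
Definition poch (l : R) (k : int) : R :=
  match k with
  | Posz n => \prod_(i < n) (l + i%:R)
  | Negz n => (\prod_(i < n.+1) (l - (i.+1)%:R))^-1
  end.

(* Formal power series in x, y : coefficient of x^p y^q. *)
Definition fps := nat -> nat -> R.

Definition fps_mul (f g : fps) : fps := fun p q =>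
  \sum_(i < p.+1) \sum_(j < q.+1) f i j * g (p - i)%N (q - j)%N.

(* x^l y^k * f *)
Definition fps_shift (l k : nat) (f : fps) : fps := fun p q =>
  if (l <= p)%N && (k <= q)%N then f (p - l)%N (q - k)%N else 0.

Definition gauss2F1 (a b d : R) : fps := fun p q =>
  if q == 0%N then poch a p * poch b p / (poch d p * p`!%:R) else 0.

Definition kummer1F1 (c e : R) : fps := fun p q =>
  if p == 0%N then poch c q / (poch e q * q`!%:R) else 0.

Definition horn_H2 (a b c d : R) : fps := fun p q =>
  poch a (Posz p - Posz q) * poch b p * poch c q / (poch d p * p`!%:R * q`!%:R).

Definition horn_H2_neg (a b c d : R) : fps := fun p q =>
  horn_H2 a b c d p q * (-1) ^+ q.

Definition main_coef (a b c d : R) (k l : nat) : R :=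
  (-1) ^+ (k - l) * (k.-1)`!%:R / ((l.-1)`!%:R * l`!%:R * (k - l)`!%:R)
  * (poch b l * poch c k / (poch (1 - a) k * poch (1 - a) (k - l)%N * poch d l)).

(* The right-hand side; the double sum over 1 <= l <= k converges in the
   formal topology: only terms with l <= p, k <= q contribute to x^p y^q. *)
Definition main_rhs (a b c d : R) : fps := fun p q =>
  horn_H2_neg a b c d p q +
  \sum_(1 <= k < q.+1) \sum_(1 <= l < k.+1)
     main_coef a b c d k l *
     fps_shift l k (horn_H2_neg (a - k%:R + l%:R) (b + l%:R) (c + k%:R) (d + l%:R)) p q.

End Defs.

(* Main.v *)
Require Import Defs.
From HB Require Import structures.
From mathcomp Require Import all_boot all_order all_algebra.
From mathcomp Require Import ring lra zify.
Import Order.TTheory GRing.Theory Num.Theory.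
Local Open Scope ring_scope.
Set Implicit Arguments. Unset Strict Implicit.

Arguments poch : simpl never.
Section H.
Variable R : numFieldType.
Implicit Types x y e : R.

Definition nonint x := forall z : int, x != z%:~R.

Lemma nonint_addn x (n : nat) : nonint x -> nonint (x + n%:R).
Proof. move=> h z; apply/eqP=> e; move: (h (z - n%:Z)); rewrite intrB -e.
by rewrite addrK eqxx. Qed.

Lemma nonint_subn x (n : nat) : nonint x -> nonint (x - n%:R).
Proof. move=> h z; apply/eqP=> e; move: (h (z + n%:Z)); rewrite intrD -e.
by rewrite subrK eqxx. Qed.

Lemma nonint_neq0 x : nonint x -> x != 0.
Proof. by move=> h; move: (h 0). Qed.

Lemma pochSl x (n : nat) : poch x n.+1 = x * poch (x + 1) n.
Proof.
rewrite /poch big_ord_recl addr0; congr (_ * _); apply: eq_bigr => i _.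
by rewrite /= -addrA -natr1 (addrC 1).
Qed.

Lemma pochSr x (n : nat) : poch x n.+1 = poch x n * (x + n%:R).
Proof. by rewrite /poch big_ord_recr. Qed.

Lemma poch0 x : poch x 0%N = 1.
Proof. by rewrite /poch big_ord0. Qed.

Lemma poch_nat_add x (m n : nat) : poch x (m + n)%N = poch x m * poch (x + m%:R) n.
Proof.
rewrite /poch big_split_ord; congr (_ * _); apply: eq_bigr => i _.
by rewrite /= natrD addrA.
Qed.

Lemma poch1z x (z : int) : nonint x -> poch x (1 + z) = x * poch (x + 1) z.
Proof.
move=> hx; have x0 := nonint_neq0 hx.
case: z => [n|n].
  by rewrite -pochSl.
case: n => [|n].
  rewrite /poch /= big_ord0 big_ord1 /= addrK mulfV //.
have -> : (1 + Negz n.+1 = Negz n)%R by rewrite !NegzE; lia.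
rewrite /poch [in RHS]big_ord_recl /= addrK invfM mulrA mulfV // mul1r; congr (_ ^-1).
apply: eq_bigr => i _; rewrite /bump /= [in RHS]mulrS; ring.
Qed.


Lemma poch_addz x (m : nat) (z : int) : nonint x ->
  poch x (Posz m + z) = poch x m * poch (x + m%:R) z.
Proof.
elim: m x => [|m IH] x hx.
  by rewrite add0r poch0 mul1r addr0.
have -> : (Posz m.+1 + z = 1 + (Posz m + z))%R by lia.
rewrite poch1z // IH; last exact: (nonint_addn 1 hx).
by rewrite pochSl mulrA -addrA -natr1 (addrC 1).
Qed.

Lemma poch_rev x (n : nat) : poch (x - n%:R) n = (-1) ^+ n * poch (1 - x) n.
Proof.
elim: n => [|n IH]; first by rewrite !poch0 expr0 mulr1.
rewrite pochSl pochSr exprS.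
have -> : x - n.+1%:R + 1 = x - n%:R by rewrite -natr1; ring.
rewrite IH -natr1; ring.
Qed.

Lemma Tsum (q : nat) x e :
  \sum_(k < q.+1) (-1) ^+ k * 'C(q, k)%:R * poch x k * poch (e + k%:R) (q - k)%N
  = poch (e - x) q.
Proof.
elim: q x e => [|q IH] x e.
  by rewrite big_ord1 /poch /= !big_ord0 expr0 !mulr1.
have hA : \sum_(k < q.+2) (-1) ^+ k * 'C(q, k)%:R * poch x k * poch (e + k%:R) (q.+1 - k)%N
   = (e + q%:R) * \sum_(k < q.+1) (-1) ^+ k * 'C(q, k)%:R * poch x k * poch (e + k%:R) (q - k)%N.
  rewrite big_ord_recr /= bin_small // mulr0n mulr0 !mul0r addr0 mulr_sumr.
  apply: eq_bigr => k _; have hk : (k <= q)%N by rewrite -ltnS.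
  rewrite subSn // pochSr -addrA -natrD subnKC //; ring.
have hB : \sum_(k < q.+1) (-1) ^+ k.+1 * 'C(q, k)%:R * poch x k.+1 * poch (e + k.+1%:R) (q - k)%N
   = - x * \sum_(k < q.+1) (-1) ^+ k * 'C(q, k)%:R * poch (x + 1) k * poch (e + 1 + k%:R) (q - k)%N.
  rewrite mulr_sumr; apply: eq_bigr => k _.
  rewrite pochSl exprS -natr1 addrA (addrAC e); ring.
rewrite IH in hB.
have E : e + 1 - (x + 1) = e - x by ring. rewrite E in hB.
rewrite big_ord_recl.
have bump0' : forall i, bump 0 i = i.+1 by [].
under eq_bigr => i _ do rewrite lift0 binS natrD !mulrDr !mulrDl.
rewrite big_split /= hB addrA.
transitivity ((e + q%:R) * poch (e - x) q + - x * poch (e - x) q); last first.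
  rewrite pochSr; ring.
congr (_ + _).
rewrite -IH -hA [RHS]big_ord_recl; congr (_ + _).
  by rewrite !bin0.
Qed.


Lemma nonint_1sub x : nonint x -> nonint (1 - x).
Proof. move=> h z; apply/eqP=> e; move: (h (1 - z)); rewrite intrB -e.
by rewrite opprB addrC subrK eqxx. Qed.

Lemma poch_neq0 x (n : nat) : nonint x -> poch x n != 0.
Proof.
move=> h; rewrite /poch prodf_seq_neq0; apply/allP => i _ /=.
rewrite addr_eq0; apply/eqP => e; move: (h (- (i : nat)%:Z)) => /eqP; apply.
by rewrite e intrN.
Qed.

Lemma fact_neq0 (n : nat) : (n`!%:R : R) != 0.
Proof. by rewrite pnatr_eq0 -lt0n fact_gt0. Qed.

Lemma Lrise (p k : nat) : poch (p%:R : R) k = ((p + k).-1 ^_ k)%:R.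
Proof.
elim: k => [|k IH]; first by rewrite poch0.
rewrite pochSr IH addnS -natrD -natrM /=; congr (_%:R).
case: (p + k)%N => [|s] /=; first by rewrite muln0 ffact0n.
by rewrite ffactSS mulnC.
Qed.

Lemma sign_sub (q k : nat) : (k <= q)%N ->
  (-1) ^+ q = (-1) ^+ (q - k) * (-1) ^+ k :> R.
Proof. by move=> h; rewrite -exprD subnK. Qed.

Lemma core_term (a : R) (p q k : nat) : nonint a -> (k <= q)%N ->
  (-1) ^+ (q - k) * 'C((p + k).-1, k)%:R / (poch (1 - a) k * (q - k)`!%:R)
  = (-1) ^+ q / (poch (1 - a) q * q`!%:R) *
    ((-1) ^+ k * 'C(q, k)%:R * poch (p%:R) k * poch (1 - a + k%:R) (q - k)%N).
Proof.
move=> ha hk.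
have h1 := nonint_1sub ha.
rewrite Lrise -bin_ffact natrM (sign_sub hk).
have eA : poch (1 - a) q = poch (1 - a) k * poch (1 - a + k%:R) (q - k)%N.
  by rewrite -poch_nat_add subnKC.
rewrite eA -(bin_fact hk) !natrM.
have nA1 := poch_neq0 k h1.
have nA2 := poch_neq0 (q - k) (nonint_addn k h1).
have nF1 := @fact_neq0 k.
have nF2 := @fact_neq0 (q - k).
have nC : ('C(q, k)%:R : R) != 0 by rewrite pnatr_eq0 -lt0n bin_gt0.
set s := (-1) ^+ k; set t := (-1) ^+ (q - k).
have ss : s * s = 1 by rewrite -expr2 sqrr_sign.
set A1 := poch (1 - a) k. set A2 := poch _ (q - k)%N.
set F1 := k`!%:R. set F2 := (q - k)`!%:R. set Cq := 'C(q, k)%:R.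
set Cr := 'C(_, k)%:R.
transitivity (t * (s * s) * Cr / (A1 * F2)); first by rewrite ss mulr1.
field.
by rewrite nA1 nA2 nF1 nF2 nC.
Qed.


Lemma core (a : R) (p q : nat) : nonint a ->
  poch a p / (poch (1 - a) q * q`!%:R) =
  poch a (Posz p - Posz q) * \sum_(k < q.+1)
     (-1) ^+ (q - k) * 'C((p + k).-1, k)%:R / (poch (1 - a) k * (q - k)`!%:R).
Proof.
move=> ha.
have haq := nonint_subn q ha.
have e1 : poch (a - q%:R) p = poch (a - q%:R) q * poch a (Posz p - Posz q).
  rewrite -[X in poch X (Posz p - Posz q)](subrK (q%:R) a) -poch_addz //.
  congr poch; lia.
have e2 : poch (a - q%:R) (p + q)%N = poch (a - q%:R) p * poch (a - q%:R + p%:R) q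
  := poch_nat_add _ _ _.
have e3 : poch (a - q%:R) (q + p)%N = poch (a - q%:R) q * poch a p.
  by rewrite poch_nat_add subrK.
have hP : poch a p = poch a (Posz p - Posz q) * poch (a + p%:R - q%:R) q.
  apply: (mulfI (poch_neq0 q haq)); rewrite -e3 addnC e2 e1 -mulrA.
  by congr (_ * (_ * poch _ _)); ring.
rewrite hP poch_rev.
rewrite (eq_bigr (fun k : 'I_q.+1 => (-1) ^+ q / (poch (1 - a) q * q`!%:R) *
    ((-1) ^+ k * 'C(q, k)%:R * poch (p%:R) k * poch (1 - a + k%:R) (q - k)%N))); last first.
  by move=> k _; rewrite core_term // -ltnS.
rewrite -mulr_sumr Tsum.
have nA := poch_neq0 q (nonint_1sub ha).
have nF := @fact_neq0 q.
have -> : 1 - (a + p%:R) = 1 - a - p%:R by ring.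
by field; rewrite nA nF.
Qed.


Lemma poch_neq0g x (n : nat) : (forall i : nat, x + i%:R != 0) -> poch x n != 0.
Proof. by move=> h; rewrite /poch prodf_seq_neq0; apply/allP => i _ /=. Qed.

Lemma term_eq (a b c d : R) (p q k l : nat) : nonint a ->
  (forall n : nat, d != - n%:R) -> (0 < l)%N -> (l <= k)%N -> (k <= q)%N ->
  main_coef a b c d k l *
     fps_shift l k (horn_H2_neg (a - k%:R + l%:R) (b + l%:R) (c + k%:R) (d + l%:R)) p q
  = poch b p * poch c q / poch d p * poch a (Posz p - Posz q) / p`!%:R *
    ((-1) ^+ (q - k) * ('C(k.-1, l.-1) * 'C(p, l))%:R / (poch (1 - a) k * (q - k)`!%:R)).
Proof.
move=> ha hd hl0 hlk hkq.
rewrite /fps_shift hkq andbT.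
case: (leqP l p) => hlp; last first.
  by rewrite (bin_small hlp) muln0 mulr0n !mulr0 mul0r mulr0.
rewrite /horn_H2_neg /horn_H2 /main_coef.
have eB : poch b p = poch b l * poch (b + l%:R) (p - l)%N by rewrite -poch_nat_add subnKC.
have eC : poch c q = poch c k * poch (c + k%:R) (q - k)%N by rewrite -poch_nat_add subnKC.
have eD : poch d p = poch d l * poch (d + l%:R) (p - l)%N by rewrite -poch_nat_add subnKC.
have hm : a - k%:R + l%:R = a - (k - l)%N%:R by rewrite natrB //; ring.
have ez : (Posz (p - l) - Posz (q - k) = Posz (k - l) + (Posz p - Posz q))%R by lia.
have eA : poch (a - k%:R + l%:R) (Posz (p - l) - Posz (q - k))
   = (-1) ^+ (k - l) * poch (1 - a) (k - l)%N * poch a (Posz p - Posz q).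
  rewrite hm ez poch_addz ?subrK ?poch_rev //; exact: nonint_subn.
have eK : ((k.-1)`!%:R : R) = 'C(k.-1, l.-1)%:R * ((l.-1)`!%:R * (k - l)`!%:R).
  have -> : (k - l = k.-1 - l.-1)%N by lia.
  by rewrite -!natrM bin_fact //; lia.
have eP : (p`!%:R : R) = 'C(p, l)%:R * (l`!%:R * (p - l)`!%:R).
  by rewrite -!natrM bin_fact.
rewrite eB eC eD eA eK eP natrM.
have nD1 : poch d l != 0.
  apply: poch_neq0g => i; rewrite addr_eq0; exact: hd.
have nD2 : poch (d + l%:R) (p - l)%N != 0.
  apply: poch_neq0g => i; rewrite -addrA -natrD addr_eq0; exact: hd.
have h1 := nonint_1sub ha.
have nA1 := poch_neq0 k h1.
have nA2 := poch_neq0 (k - l) h1.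
have nCp : ('C(p, l)%:R : R) != 0 by rewrite pnatr_eq0 -lt0n bin_gt0.
have nF1 := @fact_neq0 l.
have nF2 := @fact_neq0 (p - l).
have nF3 := @fact_neq0 (l.-1).
have nF4 := @fact_neq0 (k - l).
have nF5 := @fact_neq0 (q - k).
set s := (-1) ^+ (k - l).
have ss : s * s = 1 by rewrite -expr2 sqrr_sign.
set t := (-1) ^+ (q - k).
set PP := poch a (Posz p - Posz q).
set Ck := 'C(k.-1, l.-1)%:R.
transitivity ((s * s) * (Ck * (poch b l * poch (b + l%:R) (p - l)%N) *
   (poch c k * poch (c + k%:R) (q - k)%N) /
   (poch d l * poch (d + l%:R) (p - l)%N) * PP /
   ('C(p, l)%:R * (l`!%:R * (p - l)`!%:R)) *
   (t * 'C(p, l)%:R / (poch (1 - a) k * (q - k)`!%:R)))); last first.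
  rewrite ss mul1r; field.
  by rewrite ?nD1 ?nD2 ?nA1 ?nA2 ?nCp ?nF1 ?nF2 ?nF3 ?nF4 ?nF5.
field.
by rewrite ?nD1 ?nD2 ?nA1 ?nA2 ?nCp ?nF1 ?nF2 ?nF3 ?nF4 ?nF5.
Qed.


Lemma vand (p k : nat) : (0 < k)%N ->
  \sum_(1 <= l < k.+1) 'C(k.-1, l.-1) * 'C(p, l) = 'C((p + k).-1, k).
Proof.
case: k => [//|k] _.
rewrite big_add1 /= addnS /= -binomial.Vandermonde big_ord_recl /= subn0 (bin_small (ltnSn k)) muln0 add0n.
rewrite big_mkord; apply: eq_bigr => i _.
have bb : bump 0 i = i.+1 by []. rewrite bb subSS bin_sub; first by rewrite mulnC. by rewrite -ltnS.
Qed.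

Lemma reorg (K t X D : R) : K * (t * X / D) = (K * (t / D)) * X.
Proof. by rewrite !mulrA -(mulrA (K * t)) (mulrC X) !mulrA. Qed.

Lemma lhs_eq (a b c d : R) (p q : nat) :
  fps_mul (gauss2F1 a b d) (kummer1F1 c (1 - a)) p q =
  poch a p * poch b p / (poch d p * p`!%:R) * (poch c q / (poch (1 - a) q * q`!%:R)).
Proof.
rewrite /fps_mul big_ord_recr /= big1 ?add0r; last first.
  move=> i _; apply: big1 => j _.
  rewrite /kummer1F1 subn_eq0 leqNgt (ltn_ord i) /= mulr0 //.
rewrite big_ord_recl /= big1 ?addr0; last first.
  by move=> j _; rewrite /gauss2F1 /= mul0r.
by rewrite /gauss2F1 /kummer1F1 /= subnn subn0.
Qed.

End H.

Theorem mainTheorem5 (R : numClosedFieldType) (a b c d : R)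
  (ha : forall z : int, a != z%:~R)
  (hd : forall n : nat, d != - n%:R) :
  forall p q : nat,
    fps_mul (gauss2F1 a b d) (kummer1F1 c (1 - a)) p q = main_rhs a b c d p q.
Proof.
move=> p q.
have ha' : nonint a := ha.
rewrite lhs_eq /main_rhs.
set K := poch b p * poch c q / poch d p * poch a (Posz p - Posz q) / p`!%:R.
under eq_big_nat => k /andP[hk1 hk2].
  under eq_big_nat => l /andP[hl1 hl2].
    rewrite (term_eq b c p ha' hd hl1 hl2 hk2) reorg.
  over.
  rewrite -mulr_sumr -natr_sum vand // -reorg.
over.
rewrite -mulr_sumr.
have hc := core p q ha'.
rewrite -(big_mkord xpredT (fun k => (-1) ^+ (q - k) * 'C((p + k).-1, k)%:R /
   (poch (1 - a) k * (q - k)`!%:R))) big_ltn // in hc.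
rewrite subn0 addn0 bin0 poch0 mulr1 mul1r in hc.
transitivity (poch b p * poch c q / (poch d p * p`!%:R) *
   (poch a p / (poch (1 - a) q * q`!%:R))); first by ring.
rewrite hc /horn_H2_neg /horn_H2 /K.
have nD : poch d p != 0.
  apply: poch_neq0g => i; rewrite addr_eq0; exact: hd.
have nF1 := @fact_neq0 R p.
have nF2 := @fact_neq0 R q.
field.
by rewrite ?nD ?nF1 ?nF2.
Qed.
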